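(* For every $t>0$, the operator $B(t)=W(1)\circ DH(v(\cdot;t))\circ W(t)$ acting on $X_1$ has the same eigenvalues as $\tilde A(t)$ acting on $X_t$: $\lambda$ is an eigenvalue of $B(t)$ (i.e. $B(t)[u]=\lambda u$ for some nonzero $u\in X_1$) if and only if $\lambda$ is an eigenvalue of $\tilde A(t)$ (i.e. $\tilde A(t)[w]=\lambda w$ for some nonzero $w\in X_t$).
   Context: Fix $n\ge2$, $d>0$. $Q(t)=\frac{1-t^{n-1}}{1-t^n}$ ($t\ne1$), $Q(1)=\frac{n-1}n$; for $0\le x\le1$, $R(x;t)=\frac{1}{|1-t|}\sqrt{\left(\frac{(1-(1-t)x)^{n-1}}{1-Q(t)+Q(t)(1-(1-t)x)^n}\right)^2-1}$ ($t\ne1$), $R(x;1)=\sqrt{(n-1)(1-x)x}$; $\zeta(x;t)=\int_x^1R(\tilde x;t)^{-1}d\tilde x$, $\zeta(1;t)=0$, $P(t)=\zeta(0;t)$, $\zeta^{-1}(\cdot;t)$ the inverse of $x\mapsto\zeta(x;t)$; $v(z;t)=\frac{d}{P(t)}\left(1-(1-t)\zeta^{-1}\left(\frac{P(t)z}{d};t\right)\right)$, $z\in[0,d]$. For positive $C^2$ $f$, $H(f)=\frac{-f_{zz}}{(1+f_z^2)^{3/2}}+\frac{n-1}{f\sqrt{1+f_z^2}}$ and $DH(f)[w]=\frac{d}{ds}\big|_{s=0}H(f+sw)$. Let $X_t=\{w\in C^2[0,d]:\int_0^dwv(\cdot;t)^{n-1}dz=0,\ w_z(0)=w_z(d)=0\}$,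 $W(t)[u]=u-\frac{\int_0^du\,v(z;t)^{n-1}dz}{\int_0^dv(z;t)^{n-1}dz}$ (the projection onto $X_t$), and $\tilde A(t)=W(t)\circ DH(v(\cdot;t))$ on $X_t$. *)

(* Defs.v *)
From Stdlib Require Import Reals Lra ClassicalEpsilon.
Open Scope R_scope.

Definition is_deriv_within (a b : R) (f : R -> R) (x l : R) : Prop :=
  forall eps, 0 < eps -> exists delta, 0 < delta /\
    forall y, a <= y <= b -> y <> x -> Rabs (y - x) < delta ->
      Rabs ((f y - f x) / (y - x) - l) < eps.

(* the (chosen) derivative within [a,b]; unique when a < b *)
Definition deriv_within (a b : R) (f : R -> R) : R -> R := fun x =>
  epsilon (inhabits 0) (fun l => is_deriv_within a b f x l).

Definition continuous_within (a b : R) (f : R -> R) : Prop :=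
  forall x, a <= x <= b -> forall eps, 0 < eps -> exists delta, 0 < delta /\
    forall y, a <= y <= b -> Rabs (y - x) < delta -> Rabs (f y - f x) < eps.

Definition C2_on (a b : R) (f : R -> R) : Prop :=
  (forall x, a <= x <= b -> exists l, is_deriv_within a b f x l) /\
  (forall x, a <= x <= b -> exists l, is_deriv_within a b (deriv_within a b f) x l) /\
  continuous_within a b (deriv_within a b (deriv_within a b f)).

Definition integral (a b : R) (f : R -> R) : R :=
  epsilon (inhabits 0)
    (fun I => exists pr : Riemann_integrable f a b, RiemannInt pr = I).

Definition improper_integral (a b : R) (f : R -> R) : R :=
  epsilon (inhabits 0) (fun L =>
    forall eps, 0 < eps -> exists delta, 0 < delta /\
      forall a' b', a < a' < a + delta -> b - delta < b' < b -> a' <= b' ->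
        Rabs (integral a' b' f - L) < eps).

Definition Qf (n : nat) (t : R) : R :=
  if Req_EM_T t 1 then (INR n - 1) / INR n
  else (1 - t ^ (n - 1)) / (1 - t ^ n).

Definition Rfun (n : nat) (x t : R) : R :=
  if Req_EM_T t 1 then sqrt ((INR n - 1) * (1 - x) * x)
  else / Rabs (1 - t) *
       sqrt (((1 - (1 - t) * x) ^ (n - 1)
               / (1 - Qf n t + Qf n t * (1 - (1 - t) * x) ^ n)) ^ 2 - 1).

Definition zeta (n : nat) (x t : R) : R :=
  if Req_EM_T x 1 then 0
  else improper_integral x 1 (fun y => / Rfun n y t).

Definition Pf (n : nat) (t : R) : R := zeta n 0 t.

Definition zeta_inv (n : nat) (y t : R) : R :=
  epsilon (inhabits 0) (fun x => 0 <= x <= 1 /\ zeta n x t = y).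

Definition vf (n : nat) (d z t : R) : R :=
  d / Pf n t * (1 - (1 - t) * zeta_inv n (Pf n t * z / d) t).

(* mean curvature operator H(f), derivatives taken on [0,d] *)
Definition Hop (n : nat) (d : R) (f : R -> R) : R -> R := fun z =>
  let f1 := deriv_within 0 d f z in
  let f2 := deriv_within 0 d (deriv_within 0 d f) z in
  - f2 / Rpower (1 + f1 ^ 2) (3 / 2) + (INR n - 1) / (f z * sqrt (1 + f1 ^ 2)).

Definition DH (n : nat) (d : R) (f w : R -> R) : R -> R := fun z =>
  epsilon (inhabits 0) (fun l =>
    derivable_pt_lim (fun s => Hop n d (fun y => f y + s * w y) z) 0 l).

Definition Wproj (n : nat) (d t : R) (u : R -> R) : R -> R := fun z =>
  u z - integral 0 d (fun y => u y * vf n d y t ^ (n - 1))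
        / integral 0 d (fun y => vf n d y t ^ (n - 1)).

Definition Xt (n : nat) (d t : R) (w : R -> R) : Prop :=
  C2_on 0 d w /\
  integral 0 d (fun y => w y * vf n d y t ^ (n - 1)) = 0 /\
  deriv_within 0 d w 0 = 0 /\ deriv_within 0 d w d = 0.

Definition Atilde (n : nat) (d t : R) (w : R -> R) : R -> R :=
  Wproj n d t (DH n d (fun z => vf n d z t) w).

Definition Bop (n : nat) (d t : R) (u : R -> R) : R -> R :=
  Wproj n d 1 (DH n d (fun z => vf n d z t) (Wproj n d t u)).

Definition is_eigenvalue_on (n : nat) (d s : R)
    (T : (R -> R) -> (R -> R)) (lam : R) : Prop :=
  exists u, Xt n d s u /\ (exists z, 0 <= z <= d /\ u z <> 0) /\
    forall z, 0 <= z <= d -> T u z = lam * u z.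

(* Main.v *)
Require Import Defs.
From Stdlib Require Import Reals Lra Lia ClassicalEpsilon FunctionalExtensionality PropExtensionality Classical.
From Coquelicot Require Import Coquelicot.
Open Scope R_scope.

Definition clamp (d z : R) : R := Rmax 0 (Rmin d z).

Lemma clamp_in d z : 0 <= d -> 0 <= clamp d z <= d.
Proof. intros; unfold clamp, Rmax, Rmin; repeat destruct Rle_dec; lra. Qed.

Lemma clamp_id d z : 0 <= z <= d -> clamp d z = z.
Proof. intros; unfold clamp, Rmax, Rmin; repeat destruct Rle_dec; lra. Qed.

Lemma clamp_lip d x y : 0 <= d -> Rabs (clamp d y - clamp d x) <= Rabs (y - x).
Proof.
  intros; unfold clamp, Rmax, Rmin; repeat destruct Rle_dec;
  unfold Rabs; repeat destruct Rcase_abs; lra.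
Qed.

Lemma cont_of_eps (f : R -> R) x :
  (forall eps, 0 < eps -> exists delta, 0 < delta /\
     forall y, Rabs (y - x) < delta -> Rabs (f y - f x) < eps) ->
  continuous f x.
Proof.
  intros H. apply continuity_pt_filterlim.
  unfold continuity_pt, continue_in, limit1_in, limit_in; simpl; unfold R_dist.
  intros eps Heps. destruct (H eps Heps) as [dl [Hd Hf]].
  exists dl; split; auto. intros y [_ Hy]. auto.
Qed.

Lemma cw_cont d g : 0 <= d -> continuous_within 0 d g ->
  forall x, continuous (fun z => g (clamp d z)) x.
Proof.
  intros Hd Hg x. apply cont_of_eps. intros eps He.
  destruct (Hg (clamp d x) (clamp_in d x Hd) eps He) as [dl [Hdl Hf]].
  exists dl; split; auto. intros y Hy. apply Hf. apply clamp_in; auto.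
  eapply Rle_lt_trans; [apply clamp_lip; auto| auto].
Qed.

Lemma deriv_cont a b f x l : a <= x <= b -> is_deriv_within a b f x l ->
  forall eps, 0 < eps -> exists delta, 0 < delta /\
    forall y, a <= y <= b -> Rabs (y - x) < delta -> Rabs (f y - f x) < eps.
Proof.
  intros Hx H eps He.
  destruct (H 1 Rlt_0_1) as [dl [Hdl Hf]].
  set (e := Rmin dl (eps / (Rabs l + 1))).
  assert (Hl : 0 < Rabs l + 1) by (pose proof (Rabs_pos l); lra).
  assert (He' : 0 < e) by (unfold e; apply Rmin_glb_lt; auto; apply Rdiv_lt_0_compat; lra).
  exists e; split; auto. intros y Hy Hyx.
  destruct (Req_dec y x) as [->|Hne].
  - rewrite Rminus_diag, Rabs_R0; auto.
  - assert (Hyd : Rabs (y - x) < dl) by (eapply Rlt_le_trans; [exact Hyx| apply Rmin_l]).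
    specialize (Hf y Hy Hne Hyd).
    assert (Hyx0 : y - x <> 0) by lra.
    replace (f y - f x) with ((f y - f x) / (y - x) * (y - x)) by (field; auto).
    rewrite Rabs_mult.
    assert (Hq : Rabs ((f y - f x) / (y - x)) <= Rabs l + 1).
    { pose proof (Rabs_triang_inv ((f y - f x) / (y - x)) l). lra. }
    assert (Hye : Rabs (y - x) < eps / (Rabs l + 1)) by (eapply Rlt_le_trans; [exact Hyx| apply Rmin_r]).
    apply Rle_lt_trans with ((Rabs l + 1) * Rabs (y - x)).
    + apply Rmult_le_compat_r; auto. apply Rabs_pos.
    + apply Rmult_lt_reg_l with (/ (Rabs l + 1)). apply Rinv_0_lt_compat; lra.
      rewrite <- Rmult_assoc, Rinv_l, Rmult_1_l by lra.
      unfold Rdiv in Hye; lra.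
Qed.

Lemma C2_cw d u : C2_on 0 d u -> continuous_within 0 d u.
Proof.
  intros [H1 _] x Hx. destruct (H1 x Hx) as [l Hl]. eapply deriv_cont; eauto.
Qed.

Lemma integral_RInt f a b : ex_RInt f a b -> integral a b f = RInt f a b.
Proof.
  intros H. pose proof (ex_RInt_Reals_0 _ _ _ H) as pr.
  unfold integral.
  assert (Hex : exists I, exists pr, @RiemannInt f a b pr = I)
    by (exists (RiemannInt pr); exists pr; reflexivity).
  destruct (epsilon_spec (inhabits 0) _ Hex) as [pr' Hpr'].
  rewrite <- Hpr'. symmetry. apply RInt_Reals.
Qed.

Lemma ex_RInt_cl d (g : R -> R) : 0 < d -> (forall x, continuous (fun z => g (clamp d z)) x) ->
  ex_RInt g 0 d.
Proof.
  intros Hd Hg. apply ex_RInt_ext with (fun z => g (clamp d z)).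
  - intros x Hx. rewrite Rmin_left, Rmax_right in Hx by lra. rewrite clamp_id; auto; lra.
  - apply (@ex_RInt_continuous R_CompleteNormedModule). intros; apply Hg.
Qed.

Lemma is_deriv_shift a b u k x l :
  is_deriv_within a b (fun z => u z - k) x l <-> is_deriv_within a b u x l.
Proof.
  unfold is_deriv_within.
  assert (E : forall y, u y - k - (u x - k) = u y - u x) by (intros; ring).
  split; intros H eps He; destruct (H eps He) as [dl [Hdl Hf]]; exists dl; split; auto;
    intros y H1 H2 H3; specialize (Hf y H1 H2 H3); [rewrite E in Hf | rewrite E]; auto.
Qed.

Lemma deriv_shift a b u k :
  deriv_within a b (fun z => u z - k) = deriv_within a b u.
Proof.
  apply functional_extensionality; intro x. unfold deriv_within. f_equal.
  apply functional_extensionality; intro l. apply propositional_extensionality.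
  apply is_deriv_shift.
Qed.

Lemma C2_shift d u k : C2_on 0 d u -> C2_on 0 d (fun z => u z - k).
Proof.
  intros [H1 [H2 H3]]. unfold C2_on. rewrite deriv_shift. split; auto.
  intros x Hx. destruct (H1 x Hx) as [l Hl]. exists l. apply is_deriv_shift; auto.
Qed.

Lemma sqrt_sub_le x y : 0 <= y <= x -> sqrt x - sqrt y <= sqrt (x - y).
Proof.
  intros [Hy Hxy].
  assert (Hs : sqrt x <= sqrt y + sqrt (x - y)).
  { pose proof (sqrt_pos y). pose proof (sqrt_pos (x - y)).
    rewrite <- (sqrt_square (sqrt y + sqrt (x - y))) by lra.
    apply sqrt_le_1_alt.
    replace ((sqrt y + sqrt (x - y)) * (sqrt y + sqrt (x - y))) with
      (sqrt y * sqrt y + sqrt (x - y) * sqrt (x - y) + 2 * sqrt y * sqrt (x - y)) by ring.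
    rewrite !sqrt_sqrt by lra. nra. }
  lra.
Qed.

Lemma sqrt_diff x y : 0 <= x -> 0 <= y -> Rabs (sqrt x - sqrt y) <= sqrt (Rabs (x - y)).
Proof.
  intros Hx Hy. destruct (Rle_dec y x).
  - rewrite (Rabs_right (x - y)) by lra.
    rewrite Rabs_right. apply sqrt_sub_le; lra.
    apply Rle_ge. pose proof (sqrt_le_1_alt y x r). lra.
  - rewrite (Rabs_left1 (x - y)) by lra. rewrite Rabs_left1.
    replace (- (sqrt x - sqrt y)) with (sqrt y - sqrt x) by ring.
    replace (- (x - y)) with (y - x) by ring. apply sqrt_sub_le; lra.
    pose proof (sqrt_le_1_alt x y). lra.
Qed.

Definition Gm (x : R) : R := 2 * sqrt x - 2 * sqrt (1 - x).
Definition Mj (x : R) : R := / sqrt x + / sqrt (1 - x).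

Lemma Gm_mono x y : 0 <= x <= y -> y <= 1 -> Gm x <= Gm y.
Proof.
  intros. unfold Gm. pose proof (sqrt_le_1_alt x y). pose proof (sqrt_le_1_alt (1 - y) (1 - x)). lra.
Qed.

Lemma Gm_hold x y : 0 <= x <= 1 -> 0 <= y <= 1 -> Rabs (Gm x - Gm y) <= 4 * sqrt (Rabs (x - y)).
Proof.
  intros Hx Hy. unfold Gm.
  pose proof (sqrt_diff x y ltac:(lra) ltac:(lra)).
  pose proof (sqrt_diff (1 - x) (1 - y) ltac:(lra) ltac:(lra)).
  replace (1 - x - (1 - y)) with (- (x - y)) in H0 by ring. rewrite Rabs_Ropp in H0.
  replace (2 * sqrt x - 2 * sqrt (1 - x) - (2 * sqrt y - 2 * sqrt (1 - y)))
    with (2 * (sqrt x - sqrt y) - 2 * (sqrt (1 - x) - sqrt (1 - y))) by ring.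
  eapply Rle_trans. apply Rabs_triang. rewrite Rabs_Ropp, !Rabs_mult, Rabs_right by lra. lra.
Qed.

Lemma Gm_deriv x : 0 < x < 1 -> is_derive Gm x (Mj x).
Proof.
  intros Hx. unfold Gm, Mj. auto_derive.
  - split; [lra|]. split; [lra|]. auto.
  - assert (0 < sqrt x) by (apply sqrt_lt_R0; lra).
    assert (0 < sqrt (1 - x)) by (apply sqrt_lt_R0; lra). replace (1 + - x) with (1 - x) by ring. field. split; lra.
Qed.

Lemma Mj_cont x : 0 < x < 1 -> continuous Mj x.
Proof.
  intros Hx. apply (ex_derive_continuous (K:=R_AbsRing) (V:=R_NormedModule)). unfold Mj. auto_derive.
  assert (0 < sqrt x) by (apply sqrt_lt_R0; lra).
  assert (0 < sqrt (1 - x)) by (apply sqrt_lt_R0; lra).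
  replace (1 + - x) with (1 - x) by ring. repeat split; lra.
Qed.

Lemma RInt_Mj a b : 0 < a -> a <= b -> b < 1 -> RInt Mj a b = Gm b - Gm a.
Proof.
  intros. apply is_RInt_unique.
  apply (is_RInt_derive (V:=R_CompleteNormedModule) Gm Mj).
  - intros x Hx. rewrite Rmin_left, Rmax_right in Hx by lra. apply Gm_deriv; lra.
  - intros x Hx. rewrite Rmin_left, Rmax_right in Hx by lra. apply Mj_cont; lra.
Qed.

Definition ImpPred (a b : R) (f : R -> R) (L : R) : Prop :=
  forall eps, 0 < eps -> exists delta, 0 < delta /\
      forall a' b', a < a' < a + delta -> b - delta < b' < b -> a' <= b' ->
        Rabs (integral a' b' f - L) < eps.

Lemma improper_unique a b f L : a < b -> ImpPred a b f L -> improper_integral a b f = L.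
Proof.
  intros Hab HL. change (epsilon (inhabits 0) (ImpPred a b f) = L).
  assert (Hex : exists L, ImpPred a b f L) by eauto.
  pose proof (epsilon_spec (inhabits 0) _ Hex) as HL'.
  set (L' := epsilon (inhabits 0) (ImpPred a b f)) in *.
  apply NNPP; intro Hne.
  assert (He : 0 < Rabs (L' - L) / 2).
  { assert (L' - L <> 0) by lra. pose proof (Rabs_pos_lt _ H). lra. }
  destruct (HL _ He) as [d1 [Hd1 H1]]. destruct (HL' _ He) as [d2 [Hd2 H2]].
  set (m := Rmin (Rmin d1 d2) (b - a)).
  assert (Hm : 0 < m) by (unfold m; repeat apply Rmin_glb_lt; lra).
  assert (Hm1 : m <= d1) by (unfold m; eapply Rle_trans; [apply Rmin_l| apply Rmin_l]).
  assert (Hm2 : m <= d2) by (unfold m; eapply Rle_trans; [apply Rmin_l| apply Rmin_r]).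
  assert (Hm3 : m <= b - a) by (unfold m; apply Rmin_r).
  specialize (H1 (a + m/2) (b - m/2) ltac:(lra) ltac:(lra) ltac:(lra)).
  specialize (H2 (a + m/2) (b - m/2) ltac:(lra) ltac:(lra) ltac:(lra)).
  set (I := integral (a + m/2) (b - m/2) f) in *.
  pose proof (Rabs_triang (I - L) (L' - I)).
  replace (I - L + (L' - I)) with (L' - L) in H by ring.
  rewrite Rabs_minus_sym in H2. lra.
Qed.

Lemma improper_theory (phi : R -> R) K : 0 < K ->
  (forall x, 0 < x < 1 -> continuous phi x) ->
  (forall x, 0 < x < 1 -> 0 < phi x) ->
  (forall x, 0 < x < 1 -> phi x <= K * Mj x) ->
  exists Z : R -> R, Z 1 = 0 /\
    (forall x, 0 <= x < 1 -> improper_integral x 1 phi = Z x) /\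
    (forall x y, 0 <= x < y -> y <= 1 -> Z y < Z x) /\
    (forall x y, 0 <= x <= 1 -> 0 <= y <= 1 ->
       Rabs (Z x - Z y) <= 4 * K * sqrt (Rabs (x - y))).
Proof.
  intros HK Hc Hp Hb.
  assert (exR : forall a b, 0 < a < 1 -> 0 < b < 1 -> ex_RInt phi a b).
  { intros a b Ha Hb'. apply (@ex_RInt_continuous R_CompleteNormedModule). intros z Hz. apply Hc.
    split. eapply Rlt_le_trans; [|apply Hz]. apply Rmin_glb_lt; lra.
    eapply Rle_lt_trans; [apply Hz|]. apply Rmax_lub_lt; lra. }
  set (Phi := fun x => RInt phi (1/2) x).
  assert (PhiD : forall a b, 0 < a < 1 -> 0 < b < 1 -> Phi b - Phi a = RInt phi a b).
  { intros a b Ha Hb'. unfold Phi.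
    pose proof (RInt_Chasles (V:=R_CompleteNormedModule) phi (1/2) a b
       (exR (1/2) a ltac:(lra) Ha) (exR a b Ha Hb')) as E.
    change (RInt phi (1/2) a + RInt phi a b = RInt phi (1/2) b) in E. lra. }
  assert (Phi0 : Phi (1/2) = 0) by (unfold Phi; apply (RInt_point (V:=R_CompleteNormedModule))).
  assert (bnd : forall a b, 0 < a -> a <= b -> b < 1 -> 0 <= RInt phi a b <= K * (Gm b - Gm a)).
  { intros a b Ha Hab Hb1. split.
    - apply RInt_ge_0; auto. apply exR; lra. intros x Hx; apply Rlt_le, Hp; lra.
    - assert (EM : ex_RInt Mj a b).
      { apply (@ex_RInt_continuous R_CompleteNormedModule). intros z Hz.
        rewrite Rmin_left, Rmax_right in Hz by lra. apply Mj_cont; lra. }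
      rewrite <- RInt_Mj by lra.
      replace (K * RInt Mj a b) with (RInt (fun x => K * Mj x) a b).
      2: apply (RInt_scal (V:=R_CompleteNormedModule) Mj a b K EM).
      apply RInt_le; auto. apply exR; lra.
      apply (ex_RInt_scal (V:=R_NormedModule) Mj a b K EM).
      intros x Hx. apply Hb; lra. }
  assert (spos : forall a b, 0 < a -> a < b -> b < 1 -> 0 < RInt phi a b).
  { intros a b Ha Hab Hb1. apply RInt_gt_0; auto. intros x Hx; apply Hp; lra.
    intros x Hx; apply Hc; lra. }
  assert (PhiM : forall a b, 0 < a -> a <= b -> b < 1 -> 0 <= Phi b - Phi a <= K * (Gm b - Gm a)).
  { intros. rewrite PhiD by lra. apply bnd; lra. }
  assert (PhiS : forall a b, 0 < a -> a < b -> b < 1 -> 0 < Phi b - Phi a).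
  { intros. rewrite PhiD by lra. apply spos; lra. }
  assert (Gm1 : forall x, 0 <= x <= 1 -> Gm x <= Gm 1) by (intros; apply Gm_mono; lra).
  assert (Gm0 : forall x, 0 <= x <= 1 -> Gm 0 <= Gm x) by (intros; apply Gm_mono; lra).
  set (E := fun r => exists x, 0 < x < 1 /\ r = Phi x).
  assert (EB : bound E).
  { exists (K * (Gm 1 - Gm (1/2))). intros r [x [Hx ->]].
    destruct (Rle_dec (1/2) x).
    - pose proof (PhiM (1/2) x ltac:(lra) r ltac:(lra)). pose proof (Gm1 x ltac:(lra)). nra.
    - pose proof (PhiM x (1/2) ltac:(lra) ltac:(lra) ltac:(lra)).
      pose proof (Gm1 (1/2) ltac:(lra)). nra. }
  assert (Ene : exists r, E r) by (exists (Phi (1/2)); exists (1/2); split; [lra|reflexivity]).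
  destruct (completeness E EB Ene)
    as [U [HU1 HU2]].
  assert (Uge : forall y, 0 < y < 1 -> Phi y <= U) by (intros y Hy; apply HU1; exists y; auto).
  assert (Ule : forall y, 0 < y < 1 -> U - Phi y <= K * (Gm 1 - Gm y)).
  { intros y Hy. enough (U <= Phi y + K * (Gm 1 - Gm y)) by lra. apply HU2.
    intros r [x [Hx ->]]. destruct (Rle_dec x y).
    - pose proof (PhiM x y ltac:(lra) r ltac:(lra)). pose proof (Gm1 y ltac:(lra)). nra.
    - pose proof (PhiM y x ltac:(lra) ltac:(lra) ltac:(lra)). pose proof (Gm1 x ltac:(lra)). nra. }
  set (E' := fun r => exists x, 0 < x < 1 /\ r = - Phi x).
  assert (EB' : bound E').
  { exists (K * (Gm (1/2) - Gm 0)). intros r [x [Hx ->]].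
    destruct (Rle_dec x (1/2)).
    - pose proof (PhiM x (1/2) ltac:(lra) r ltac:(lra)). pose proof (Gm0 x ltac:(lra)). nra.
    - pose proof (PhiM (1/2) x ltac:(lra) ltac:(lra) ltac:(lra)).
      pose proof (Gm0 (1/2) ltac:(lra)). nra. }
  assert (Ene' : exists r, E' r) by (exists (- Phi (1/2)); exists (1/2); split; [lra|reflexivity]).
  destruct (completeness E' EB' Ene')
    as [V [HV1 HV2]].
  assert (Lole : forall y, 0 < y < 1 -> - V <= Phi y).
  { intros y Hy. enough (- Phi y <= V) by lra. apply HV1; exists y; auto. }
  assert (Loge : forall y, 0 < y < 1 -> Phi y - - V <= K * (Gm y - Gm 0)).
  { intros y Hy. enough (V <= - Phi y + K * (Gm y - Gm 0)) by lra. apply HV2.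
    intros r [x [Hx ->]]. destruct (Rle_dec y x).
    - pose proof (PhiM y x ltac:(lra) r ltac:(lra)). pose proof (Gm0 y ltac:(lra)). nra.
    - pose proof (PhiM x y ltac:(lra) ltac:(lra) ltac:(lra)). pose proof (Gm0 x ltac:(lra)). nra. }
  set (Psi := fun x => if Req_EM_T x 1 then U else if Req_EM_T x 0 then - V else Phi x).
  assert (Upos : forall x, 0 < x < 1 -> 0 < U - Phi x).
  { intros x Hx. pose proof (Uge ((x + 1) / 2) ltac:(lra)). pose proof (PhiS x ((x+1)/2) ltac:(lra) ltac:(lra) ltac:(lra)). lra. }
  assert (Lpos : forall x, 0 < x < 1 -> 0 < Phi x - - V).
  { intros x Hx. pose proof (Lole (x / 2) ltac:(lra)). pose proof (PhiS (x/2) x ltac:(lra) ltac:(lra) ltac:(lra)). lra. }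
  assert (PsiInc : forall x y, 0 <= x < y -> y <= 1 -> 0 < Psi y - Psi x <= K * (Gm y - Gm x)).
  { intros x y Hxy Hy. unfold Psi.
    destruct (Req_EM_T y 1) as [Ey|Ey]; destruct (Req_EM_T x 1) as [Ex|Ex]; try lra;
    destruct (Req_EM_T x 0) as [Ex0|Ex0].
    - subst. pose proof (Ule (1/2) ltac:(lra)). pose proof (Loge (1/2) ltac:(lra)).
      pose proof (Upos (1/2) ltac:(lra)). pose proof (Lpos (1/2) ltac:(lra)). split; lra.
    - subst. pose proof (Ule x ltac:(lra)). pose proof (Upos x ltac:(lra)). lra.
    - destruct (Req_EM_T y 0); [lra|]. subst. pose proof (Loge y ltac:(lra)). pose proof (Lpos y ltac:(lra)). lra.
    - destruct (Req_EM_T y 0); [lra|]. pose proof (PhiM x y ltac:(lra) ltac:(lra) ltac:(lra)).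
      pose proof (PhiS x y ltac:(lra) ltac:(lra) ltac:(lra)). lra. }
  exists (fun x => U - Psi x). split; [|split; [|split]].
  - unfold Psi. destruct (Req_EM_T 1 1); lra.
  - intros x Hx. apply improper_unique; [lra|].
    intros eps He.
    assert (Hq : 0 < eps / (8 * K)) by (apply Rdiv_lt_0_compat; lra).
    exists ((eps / (8 * K)) ^ 2). split; [nra|].
    intros a' b' Ha' Hb' Hab.
    assert (Hsq : sqrt ((eps / (8 * K)) ^ 2) = eps / (8 * K)) by (apply sqrt_pow2; lra).
    rewrite integral_RInt by (apply exR; lra).
    rewrite <- PhiD by lra.
    assert (Pa : Psi a' = Phi a').
    { unfold Psi. destruct (Req_EM_T a' 1); [lra|]. destruct (Req_EM_T a' 0); [lra|]. auto. }
    assert (Pb : Psi b' = Phi b').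
    { unfold Psi. destruct (Req_EM_T b' 1); [lra|]. destruct (Req_EM_T b' 0); [lra|]. auto. }
    assert (P1 : Psi 1 = U) by (unfold Psi; destruct (Req_EM_T 1 1); lra).
    pose proof (PsiInc x a' ltac:(lra) ltac:(lra)) as HX.
    pose proof (PsiInc b' 1 ltac:(lra) ltac:(lra)) as HY.
    rewrite Pa in HX. rewrite Pb, P1 in HY.
    pose proof (Gm_hold a' x ltac:(lra) ltac:(lra)) as G1.
    pose proof (Gm_hold 1 b' ltac:(lra) ltac:(lra)) as G2.
    rewrite (Rabs_right (a' - x)) in G1 by lra. rewrite (Rabs_right (1 - b')) in G2 by lra.
    assert (S1 : sqrt (a' - x) < eps / (8 * K)) by (rewrite <- Hsq; apply sqrt_lt_1_alt; lra).
    assert (S2 : sqrt (1 - b') < eps / (8 * K)) by (rewrite <- Hsq; apply sqrt_lt_1_alt; lra).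
    assert (T1 : Gm a' - Gm x <= 4 * sqrt (a' - x)) by (pose proof (Rle_abs (Gm a' - Gm x)); lra).
    assert (T2 : Gm 1 - Gm b' <= 4 * sqrt (1 - b')) by (pose proof (Rle_abs (Gm 1 - Gm b')); lra).
    assert (K * (Gm a' - Gm x) < eps / 2).
    { apply Rle_lt_trans with (K * (4 * sqrt (a' - x))). apply Rmult_le_compat_l; lra.
      replace (eps / 2) with (K * (4 * (eps / (8 * K)))) by (field; lra). apply Rmult_lt_compat_l; lra. }
    assert (K * (Gm 1 - Gm b') < eps / 2).
    { apply Rle_lt_trans with (K * (4 * sqrt (1 - b'))). apply Rmult_le_compat_l; lra.
      replace (eps / 2) with (K * (4 * (eps / (8 * K)))) by (field; lra). apply Rmult_lt_compat_l; lra. }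
    apply Rabs_def1; lra.
  - intros x y Hxy Hy. pose proof (PsiInc x y Hxy Hy). lra.
  - intros x y Hx Hy.
    assert (W : forall x y, 0 <= x <= y -> y <= 1 -> Rabs ((U - Psi x) - (U - Psi y)) <= 4 * K * sqrt (Rabs (x - y))).
    { intros a b Hab Hb1. destruct (Req_dec a b) as [->|Hne].
      - rewrite !Rminus_diag, !Rabs_R0, sqrt_0. lra.
      - pose proof (PsiInc a b ltac:(lra) Hb1). pose proof (Gm_hold a b ltac:(lra) ltac:(lra)).
        rewrite Rabs_right by lra. rewrite Rabs_minus_sym in H0. rewrite (Rabs_minus_sym a b) in H0 |- *.
        pose proof (Rle_abs (Gm b - Gm a)).
        assert (K * (Gm b - Gm a) <= K * (4 * sqrt (Rabs (b - a)))) by (apply Rmult_le_compat_l; lra). lra. }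
    destruct (Rle_dec x y).
    + apply W; lra.
    + rewrite Rabs_minus_sym, (Rabs_minus_sym x y). apply W; lra.
Qed.

Lemma inv_theory (Z : R -> R) C : 0 < C -> Z 1 = 0 ->
  (forall x y, 0 <= x < y -> y <= 1 -> Z y < Z x) ->
  (forall x y, 0 <= x <= 1 -> 0 <= y <= 1 -> Rabs (Z x - Z y) <= C * sqrt (Rabs (x - y))) ->
  (forall y, 0 <= y <= Z 0 -> exists x, 0 <= x <= 1 /\ Z x = y) /\
  (forall x0, 0 <= x0 <= 1 -> forall eps, 0 < eps -> exists delta, 0 < delta /\
     forall x, 0 <= x <= 1 -> Rabs (Z x - Z x0) < delta -> Rabs (x - x0) < eps).
Proof.
  intros HC Z1 Hs Hh.
  assert (Zle : forall x y, 0 <= x <= y -> y <= 1 -> Z y <= Z x).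
  { intros x y Hxy Hy. destruct (Req_dec x y) as [->|]; [lra|]. apply Rlt_le, Hs; lra. }
  split.
  - intros y Hy.
    destruct (Req_dec y (Z 0)) as [Ey|Ey]; [exists 0; split; [lra|auto]|].
    destruct (Req_dec y 0) as [Ey0|Ey0]; [exists 1; split; [lra|lra]|].
    set (g := fun x => y - Z (clamp 1 x)).
    assert (gc : continuity g).
    { intros x. apply continuity_pt_filterlim. apply cont_of_eps. intros eps He.
      exists ((eps / C) ^ 2). split; [apply pow_lt; apply Rdiv_lt_0_compat; lra|].
      intros x' Hx'. unfold g.
      replace (y - Z (clamp 1 x') - (y - Z (clamp 1 x))) with (- (Z (clamp 1 x') - Z (clamp 1 x))) by ring.
      rewrite Rabs_Ropp.
      pose proof (clamp_in 1 x ltac:(lra)). pose proof (clamp_in 1 x' ltac:(lra)).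
      eapply Rle_lt_trans. apply Hh; auto.
      pose proof (clamp_lip 1 x x' ltac:(lra)).
      assert (sqrt (Rabs (clamp 1 x' - clamp 1 x)) < eps / C).
      { rewrite <- (sqrt_pow2 (eps / C)) by (apply Rlt_le, Rdiv_lt_0_compat; lra).
        apply sqrt_lt_1_alt. split; [apply Rabs_pos| lra]. }
      apply Rlt_le_trans with (C * (eps / C)); [apply Rmult_lt_compat_l; auto| right; field; lra]. }
    assert (g0 : g 0 < 0) by (unfold g; rewrite clamp_id by lra; lra).
    assert (g1 : 0 < g 1) by (unfold g; rewrite clamp_id by lra; lra).
    destruct (IVT g 0 1 gc ltac:(lra) g0 g1) as [x [Hx Hgx]].
    exists x; split; auto. unfold g in Hgx. rewrite clamp_id in Hgx by lra. lra.
  - intros x0 Hx0 eps He.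
    assert (D1 : exists d1, 0 < d1 /\ forall x, 0 <= x -> x <= x0 - eps / 2 -> d1 <= Z x - Z x0).
    { destruct (Rle_dec 0 (x0 - eps / 2)).
      - exists (Z (x0 - eps / 2) - Z x0). split.
        + pose proof (Hs (x0 - eps/2) x0 ltac:(lra) ltac:(lra)). lra.
        + intros x Hx Hxl. pose proof (Zle x (x0 - eps/2) ltac:(lra) ltac:(lra)). lra.
      - exists 1. split; [lra|]. intros; lra. }
    assert (D2 : exists d2, 0 < d2 /\ forall x, x0 + eps / 2 <= x -> x <= 1 -> d2 <= Z x0 - Z x).
    { destruct (Rle_dec (x0 + eps / 2) 1).
      - exists (Z x0 - Z (x0 + eps / 2)). split.
        + pose proof (Hs x0 (x0 + eps/2) ltac:(lra) ltac:(lra)). lra.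
        + intros x Hx Hxl. pose proof (Zle (x0 + eps/2) x ltac:(lra) ltac:(lra)). lra.
      - exists 1. split; [lra|]. intros; lra. }
    destruct D1 as [d1 [Hd1 H1]]. destruct D2 as [d2 [Hd2 H2]].
    exists (Rmin d1 d2). split; [apply Rmin_glb_lt; auto|].
    intros x Hx Hz.
    pose proof (Rmin_l d1 d2). pose proof (Rmin_r d1 d2).
    apply Rabs_def2 in Hz. destruct Hz as [Hz1 Hz2].
    apply Rabs_def1.
    + destruct (Rle_dec (x0 + eps / 2) x); [|lra]. specialize (H2 x r ltac:(lra)). lra.
    + destruct (Rle_dec x (x0 - eps / 2)); [|lra]. specialize (H1 x ltac:(lra) r). lra.
Qed.

Fixpoint Tsum (k : nat) (u : R) : R :=
  match k with O => 0 | S k' => Tsum k' u + u ^ k' end.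

Lemma T_geom k u : Tsum k u * (1 - u) = 1 - u ^ k.
Proof. induction k; simpl; [ring|]. rewrite Rmult_plus_distr_r, IHk. ring. Qed.

Lemma T_shift k u : Tsum (S k) u = 1 + u * Tsum k u.
Proof. induction k; [simpl; ring|]. change (Tsum (S (S k)) u) with (Tsum (S k) u + u ^ (S k)).
  simpl in IHk |- *. rewrite Rmult_plus_distr_l. lra. Qed.

Lemma T_rev k u : 0 < u -> u ^ k * Tsum (S k) (/ u) = Tsum (S k) u.
Proof.
  intros Hu. induction k; [simpl; ring|].
  change (Tsum (S (S k)) (/ u)) with (Tsum (S k) (/ u) + (/ u) ^ (S k)).
  rewrite Rmult_plus_distr_l.
  assert (E : u ^ S k * (/ u) ^ S k = 1).
  { rewrite <- Rpow_mult_distr, Rinv_r, pow1; lra. }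
  rewrite E. change (u ^ S k) with (u * u ^ k). rewrite Rmult_assoc, IHk.
  rewrite (T_shift (S k) u). ring.
Qed.

Lemma T_ge1 k u : 0 <= u -> 1 <= Tsum (S k) u.
Proof.
  intros Hu. induction k; [simpl; lra|].
  change (Tsum (S (S k)) u) with (Tsum (S k) u + u ^ (S k)).
  pose proof (pow_le u (S k) Hu). lra.
Qed.

Lemma T_mono k u w : 0 <= u <= w -> Tsum k u <= Tsum k w.
Proof.
  intros H. induction k; simpl; [lra|]. pose proof (pow_incr u w k H). lra.
Qed.

Lemma T_diff k u w : 0 <= u -> 0 <= w ->
  (u - w) ^ 2 <= (Tsum (S (S k)) u - Tsum (S (S k)) w) * (u - w).
Proof.
  intros Hu Hw. induction k; [simpl; nra|].
  change (Tsum (S (S (S k))) u) with (Tsum (S (S k)) u + u ^ (S (S k))).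
  change (Tsum (S (S (S k))) w) with (Tsum (S (S k)) w + w ^ (S (S k))).
  assert (0 <= (u ^ S (S k) - w ^ S (S k)) * (u - w)).
  { destruct (Rle_dec u w).
    - pose proof (pow_incr u w (S (S k)) ltac:(lra)). nra.
    - pose proof (pow_incr w u (S (S k)) ltac:(lra)). nra. }
  nra.
Qed.

Lemma num_bound p t x : (1 <= p)%nat -> 0 < t -> t <> 1 -> 0 < x < 1 ->
  (1 - t) ^ 2 * (x * (1 - x)) / (Rmax 1 t ^ 2 * Tsum (S p) (/ Rmin 1 t) ^ 2) <=
  (1 - (1 - t) * x) ^ p -
  (t ^ p / Tsum (S p) t + (1 - t ^ p / Tsum (S p) t) * (1 - (1 - t) * x) ^ (S p)).
Proof.
  intros Hp Ht Ht1 Hx.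
  set (s := 1 - (1 - t) * x). set (m := Rmin 1 t). set (M := Rmax 1 t).
  assert (Hm : 0 < m) by (unfold m, Rmin; destruct Rle_dec; lra).
  assert (HmM : m <= 1 <= M /\ m <= t <= M) by (unfold m, M, Rmin, Rmax; split; destruct Rle_dec; lra).
  assert (Hs : m <= s <= M).
  { unfold s, m, M, Rmin, Rmax. destruct Rle_dec; nra. }
  assert (Hs0 : 0 < s) by lra.
  set (Ts := Tsum (S p) s). set (Tn := Tsum (S p) t).
  set (As := Tsum (S p) (/ s)). set (At := Tsum (S p) (/ t)). set (Tm := Tsum (S p) (/ m)).
  assert (E1 : s ^ p * As = Ts) by (apply T_rev; auto).
  assert (E2 : t ^ p * At = Tn) by (apply T_rev; auto).
  assert (Hi : 0 < / s /\ 0 < / t /\ 0 < / m) by (repeat split; apply Rinv_0_lt_compat; lra).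
  assert (HTs : 1 <= Ts) by (apply T_ge1; lra).
  assert (HAs : 1 <= As) by (apply T_ge1; lra).
  assert (HAt : 1 <= At) by (apply T_ge1; lra).
  assert (HAsm : As <= Tm) by (apply T_mono; split; [lra| apply Rinv_le_contravar; lra]).
  assert (HAtm : At <= Tm) by (apply T_mono; split; [lra| apply Rinv_le_contravar; lra]).
  assert (E3 : s ^ (S p) = 1 + (s - 1) * Ts).
  { pose proof (T_geom (S p) s). fold Ts in H. lra. }
  assert (Hsp : 0 < s ^ p) by (apply pow_lt; lra).
  assert (Htp : 0 < t ^ p) by (apply pow_lt; lra).
  assert (Hpsi : t ^ p / Tn = / At).
  { rewrite <- E2. field. lra. }
  assert (Hspe : s ^ p = Ts / As) by (rewrite <- E1; field; lra).
  assert (Num : s ^ p - (t ^ p / Tn + (1 - t ^ p / Tn) * s ^ (S p)) =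
                (s - 1) * Ts * (As - At) / (As * At)).
  { assert (Num1 : s ^ p - (t ^ p / Tn + (1 - t ^ p / Tn) * s ^ (S p)) =
       (s - 1) * (/ At * Ts) - (s ^ (S p) - s ^ p)) by (rewrite Hpsi, E3; ring).
    assert (Num2 : s ^ (S p) - s ^ p = (s - 1) * s ^ p) by (simpl; ring).
    rewrite Num1, Num2, Hspe. field. split; lra. }
  fold Tn. rewrite Num.
  pose proof (T_diff (pred p - 0) (/ s) (/ t) ltac:(lra) ltac:(lra)) as TD.
  replace (S (S (pred p - 0))) with (S p) in TD by lia. fold As At in TD.
  set (q := (1 - t) ^ 2 * (x * (1 - x))).
  assert (Hq : 0 < q).
  { unfold q. apply Rmult_lt_0_compat; [apply pow2_gt_0; lra| nra]. }
  assert (Eq : (s - 1) * (/ s - / t) = q / (s * t)).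
  { assert (Eq0 : (s - 1) * (t - s) = q) by (unfold q, s; ring).
    rewrite <- Eq0. field. split; lra. }
  assert (Hst : s * t <= M ^ 2) by (simpl; nra).
  assert (Hst0 : 0 < s * t) by nra.
  set (e := / s - / t) in *.
  assert (He : 0 < (s - 1) * e) by (rewrite Eq; apply Rdiv_lt_0_compat; lra).
  assert (Key : q / (s * t) <= (s - 1) * (As - At)).
  { rewrite <- Eq.
    assert (e <> 0) by (intro; rewrite H in He; lra).
    assert (Hr : 0 < (s - 1) / e).
    { replace ((s - 1) / e) with ((s - 1) * e / e ^ 2) by (field; auto).
      apply Rdiv_lt_0_compat; auto. apply pow2_gt_0; auto. }
    replace ((s - 1) * e) with ((s - 1) / e * e ^ 2) by (field; auto).
    replace ((s - 1) * (As - At)) with ((s - 1) / e * ((As - At) * e)) by (field; auto).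
    apply Rmult_le_compat_l; lra. }
  assert (HM : 0 < M ^ 2) by (apply pow_lt; lra).
  assert (HTm : 0 < Tm ^ 2) by (apply pow_lt; lra).
  assert (HAA : As * At <= Tm ^ 2) by (simpl; nra).
  apply Rle_trans with (q / (s * t) / (As * At)).
  - unfold Rdiv. rewrite Rmult_assoc. apply Rmult_le_compat_l; [lra|].
    rewrite <- Rinv_mult. apply Rinv_le_contravar; [apply Rmult_lt_0_compat; [lra| apply Rmult_lt_0_compat; lra]|].
    replace (s * t * (As * At)) with ((s * t) * (As * At)) by ring.
    replace (M ^ 2 * Tm ^ 2) with (M ^ 2 * Tm ^ 2) by ring.
    apply Rmult_le_compat; nra.
  - unfold Rdiv. apply Rmult_le_compat_r. apply Rlt_le, Rinv_0_lt_compat; nra.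
    replace ((s - 1) * Ts * (As - At)) with (Ts * ((s - 1) * (As - At))) by ring.
    assert (0 <= q * / (s * t)) by (apply Rlt_le, Rdiv_lt_0_compat; lra).
    unfold Rdiv in Key. nra.
Qed.

Lemma T_nonneg k u : 0 <= u -> 0 <= Tsum k u.
Proof. intros Hu; induction k; simpl; [lra|]. pose proof (pow_le u k Hu). lra. Qed.

Lemma cont_poly_helper (f : R -> R) x : ex_derive f x -> continuous f x.
Proof. intros; apply (ex_derive_continuous (K:=R_AbsRing) (V:=R_NormedModule)); auto. Qed.

Lemma Rfun_props n t : (2 <= n)%nat -> 0 < t -> exists c, 0 < c /\
  forall x, 0 < x < 1 -> c * sqrt (x * (1 - x)) <= Rfun n x t /\ continuous (fun y => Rfun n y t) x.
Proof.
  intros Hn Ht. unfold Rfun.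
  destruct (Req_EM_T t 1) as [Et|Et].
  - exists 1. split; [lra|]. intros x Hx. split.
    + rewrite Rmult_1_l. apply sqrt_le_1_alt.
      assert (2 <= INR n) by (replace 2 with (INR 2) by (simpl; lra); apply le_INR; auto).
      assert (0 < x * (1 - x)) by nra. nra.
    + apply continuous_sqrt_comp. apply cont_poly_helper. auto_derive. auto.
  - destruct n as [|[|m]]; try lia.
    replace (S (S m) - 1)%nat with (S m) by lia.
    set (p := S m).
    set (Tn := Tsum (S p) t).
    set (psi := t ^ p / Tn).
    set (M := Rmax 1 t). set (Tm := Tsum (S p) (/ Rmin 1 t)).
    assert (HM : 1 <= M /\ t <= M) by (unfold M, Rmax; destruct Rle_dec; lra).
    set (DM := 1 + M ^ (S p)).
    assert (HTn : t ^ p <= Tn).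
    { unfold Tn. change (Tsum (S p) t) with (Tsum p t + t ^ p). pose proof (T_nonneg p t). lra. }
    assert (Htp : 0 < t ^ p) by (apply pow_lt; lra).
    assert (Hpsi : 0 < psi <= 1).
    { unfold psi. split. apply Rdiv_lt_0_compat; lra.
      apply Rmult_le_reg_r with Tn; [lra|]. unfold Rdiv. rewrite Rmult_assoc, Rinv_l; lra. }
    assert (HQ : Qf (S p) t = 1 - psi).
    { unfold Qf. destruct (Req_EM_T t 1); [lra|]. replace (S p - 1)%nat with p by lia.
      pose proof (T_geom p t). pose proof (T_geom (S p) t). fold Tn in H0.
      unfold psi. assert (1 - t <> 0) by lra.
      assert (Tn = Tsum p t + t ^ p) by reflexivity.
      rewrite <- H, <- H0. replace (Tsum p t) with (Tn - t ^ p) by lra. field. split; lra. }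
    rewrite HQ.
    assert (HTm : 0 < Tm) by (unfold Tm; pose proof (T_ge1 p (/ Rmin 1 t)); 
       assert (0 < Rmin 1 t) by (unfold Rmin; destruct Rle_dec; lra);
       assert (0 <= / Rmin 1 t) by (apply Rlt_le, Rinv_0_lt_compat; lra); lra).
    assert (HDM : 1 <= DM) by (unfold DM; pose proof (pow_le M (S p)); lra).
    exists (sqrt (/ (M ^ 2 * Tm ^ 2 * DM))). split.
    { apply sqrt_lt_R0. apply Rinv_0_lt_compat. apply Rmult_lt_0_compat; [apply Rmult_lt_0_compat|]; try apply pow_lt; lra. }
    intros x Hx.
    set (s := 1 - (1 - t) * x).
    assert (Hs : 0 < s /\ s <= M).
    { unfold s, M, Rmax. destruct Rle_dec; nra. }
    assert (Hsn : 0 <= s ^ (S p) <= M ^ (S p)).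
    { split. apply pow_le; lra. apply pow_incr; lra. }
    set (D := 1 - (1 - psi) + (1 - psi) * s ^ S p).
    assert (HD : psi <= D <= DM) by (unfold D, DM; nra).
    split.
    + pose proof (num_bound p t x ltac:(unfold p; lia) Ht Et Hx) as NB.
      fold s Tn psi in NB. fold M Tm in NB.
      replace (psi + (1 - psi) * s ^ S p) with D in NB by (unfold D; ring).
      set (q := (1 - t) ^ 2 * (x * (1 - x))) in NB.
      assert (Hq : 0 < q) by (unfold q; apply Rmult_lt_0_compat; [apply pow2_gt_0; lra| nra]).
      assert (Hc0 : 0 < M ^ 2 * Tm ^ 2) by (apply Rmult_lt_0_compat; apply pow_lt; lra).
      set (f := s ^ p / D).
      assert (Hf1 : q / (M ^ 2 * Tm ^ 2) / DM <= f - 1).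
      { unfold f. replace (s ^ p / D - 1) with ((s ^ p - D) / D) by (field; lra).
        apply Rle_trans with ((s ^ p - D) / DM).
        - unfold Rdiv. apply Rmult_le_compat_r. apply Rlt_le, Rinv_0_lt_compat; lra. exact NB.
        - unfold Rdiv. apply Rmult_le_compat_l.
          + apply Rle_trans with (q / (M ^ 2 * Tm ^ 2)); [|exact NB]. apply Rlt_le, Rdiv_lt_0_compat; lra.
          + apply Rinv_le_contravar; lra. }
      assert (Hqpos : 0 < q / (M ^ 2 * Tm ^ 2) / DM) by (repeat apply Rdiv_lt_0_compat; lra).
      assert (Hf2 : f - 1 <= f ^ 2 - 1) by nra.
      assert (Hsq : sqrt (q / (M ^ 2 * Tm ^ 2) / DM) <= sqrt (f ^ 2 - 1)) by (apply sqrt_le_1_alt; lra).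
      assert (E : sqrt (q / (M ^ 2 * Tm ^ 2) / DM) =
                  sqrt (/ (M ^ 2 * Tm ^ 2 * DM)) * (Rabs (1 - t) * sqrt (x * (1 - x)))).
      { rewrite <- sqrt_Rsqr_abs.
        assert (B0 : 0 <= Rsqr (1 - t)) by apply Rle_0_sqr.
        assert (C0 : 0 <= x * (1 - x)) by nra.
        assert (A0 : 0 <= / (M ^ 2 * Tm ^ 2 * DM)) by (apply Rlt_le, Rinv_0_lt_compat; apply Rmult_lt_0_compat; lra).
        rewrite <- (sqrt_mult _ _ B0 C0).
        rewrite <- (sqrt_mult _ _ A0 (Rmult_le_pos _ _ B0 C0)).
        f_equal. unfold q, Rsqr. field. split; lra. }
      rewrite E in Hsq.
      assert (Ha : 0 < Rabs (1 - t)) by (apply Rabs_pos_lt; lra).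
      apply Rmult_le_reg_l with (Rabs (1 - t)); auto.
      rewrite <- (Rmult_assoc (Rabs (1 - t)) (/ Rabs (1 - t))), Rinv_r, Rmult_1_l by lra.
      lra.
    + apply (continuous_mult (fun _ => / Rabs (1 - t))).
      apply continuous_const.
      apply continuous_sqrt_comp. apply cont_poly_helper. auto_derive.
      replace (1 + - ((1 - t) * x)) with s by (unfold s; ring).
      change (s * (s * s ^ m)) with (s ^ S p). fold D. lra.
Qed.

Lemma cont_pow (f : R -> R) k x : continuous f x -> continuous (fun y => f y ^ k) x.
Proof.
  intros H. apply (continuous_comp f (fun z : R => z ^ k)); auto.
  apply (ex_derive_continuous (K:=R_AbsRing) (V:=R_NormedModule) (fun z : R => z ^ k)). auto_derive. auto.
Qed.


Lemma cont_mul (f g : R -> R) x : continuous f x -> continuous g x -> continuous (fun y => f y * g y) x.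
Proof. intros; apply (continuous_mult f g); auto. Qed.

Lemma cont_sub (f g : R -> R) x : continuous f x -> continuous g x -> continuous (fun y => f y - g y) x.
Proof. intros; apply (continuous_minus f g); auto. Qed.

Lemma cont_cst (c : R) x : continuous (fun _ : R => c) x.
Proof. apply continuous_const. Qed.

Lemma KEY n d s : (2 <= n)%nat -> 0 < d -> 0 < s ->
  (forall x, continuous (fun z => vf n d (clamp d z) s ^ (n - 1)) x) /\
  0 < integral 0 d (fun y => vf n d y s ^ (n - 1)).
Proof.
  intros Hn Hd Hs.
  destruct (Rfun_props n s Hn Hs) as [c [Hc HR]].
  set (phi := fun y => / Rfun n y s).
  assert (Rpos : forall x, 0 < x < 1 -> 0 < Rfun n x s).
  { intros x Hx. destruct (HR x Hx) as [H _].
    assert (0 < sqrt (x * (1 - x))) by (apply sqrt_lt_R0; nra). nra. }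
  assert (Hphi_c : forall x, 0 < x < 1 -> continuous phi x).
  { intros x Hx. unfold phi. apply continuous_Rinv_comp. apply HR; auto.
    pose proof (Rpos x Hx). lra. }
  assert (Hphi_p : forall x, 0 < x < 1 -> 0 < phi x) by (intros; unfold phi; apply Rinv_0_lt_compat, Rpos; auto).
  assert (Hphi_b : forall x, 0 < x < 1 -> phi x <= 2 / c * Mj x).
  { intros x Hx. unfold phi, Mj. destruct (HR x Hx) as [H _].
    set (a := sqrt x). set (b := sqrt (1 - x)).
    assert (Ha : 0 < a) by (apply sqrt_lt_R0; lra).
    assert (Hb : 0 < b) by (apply sqrt_lt_R0; lra).
    assert (Haa : a * a = x) by (apply sqrt_sqrt; lra).
    assert (Hbb : b * b = 1 - x) by (apply sqrt_sqrt; lra).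
    rewrite sqrt_mult in H by lra. fold a b in H.
    assert (Hab : 1 <= a + b) by nra.
    apply Rle_trans with (/ (c * (a * b))).
    - apply Rinv_le_contravar; auto. apply Rmult_lt_0_compat; auto. apply Rmult_lt_0_compat; auto.
    - assert (E : 2 / c * (/ a + / b) - / (c * (a * b)) = (2 * (a + b) - 1) / (c * (a * b))) by (field; lra).
      assert (0 <= (2 * (a + b) - 1) / (c * (a * b))).
      { apply Rdiv_le_0_compat; [lra|]. apply Rmult_lt_0_compat; auto. apply Rmult_lt_0_compat; auto. }
      lra. }
  assert (HK : 0 < 2 / c) by (apply Rdiv_lt_0_compat; lra).
  destruct (improper_theory phi (2 / c) HK Hphi_c Hphi_p Hphi_b) as [Z [Z1 [Himp [Hstr Hhol]]]].
  assert (zeq : forall x, 0 <= x <= 1 -> zeta n x s = Z x).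
  { intros x Hx. unfold zeta. destruct (Req_EM_T x 1) as [->|Hx1]; auto. apply Himp. lra. }
  assert (HP : Pf n s = Z 0) by (apply zeq; lra).
  assert (HP0 : 0 < Pf n s) by (rewrite HP; rewrite <- Z1; apply Hstr; lra).
  assert (HC : 0 < 4 * (2 / c)) by lra.
  destruct (inv_theory Z (4 * (2 / c)) HC Z1 Hstr Hhol) as [Hsurj Hinvc].
  assert (zinv : forall y, 0 <= y <= Pf n s ->
            0 <= zeta_inv n y s <= 1 /\ Z (zeta_inv n y s) = y).
  { intros y Hy. rewrite HP in Hy. destruct (Hsurj y Hy) as [x [Hx Hzx]].
    assert (Hex : exists x, 0 <= x <= 1 /\ zeta n x s = y) by (exists x; split; auto; rewrite zeq; auto).
    pose proof (epsilon_spec (inhabits 0) _ Hex) as [H1 H2].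
    unfold zeta_inv. split; auto. rewrite <- zeq; auto. }
  set (P := Pf n s) in *.
  set (X := fun z => zeta_inv n (P * z / d) s).
  assert (Xin : forall z, 0 <= z <= d -> 0 <= X z <= 1 /\ Z (X z) = P * z / d).
  { intros z Hz. apply zinv. split. apply Rmult_le_pos; [nra| apply Rlt_le, Rinv_0_lt_compat; lra].
    apply Rmult_le_reg_r with d; auto. unfold Rdiv. rewrite Rmult_assoc, Rinv_l by lra. nra. }
  assert (Xcw : continuous_within 0 d X).
  { intros z0 Hz0 eps He. destruct (Xin z0 Hz0) as [Hx0 HZ0].
    destruct (Hinvc (X z0) Hx0 eps He) as [dl [Hdl Hf]].
    exists (dl * d / P). split. apply Rdiv_lt_0_compat; [nra| lra].
    intros z Hz Hzz. destruct (Xin z Hz) as [Hx HZ]. apply Hf; auto.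
    rewrite HZ, HZ0.
    replace (P * z / d - P * z0 / d) with (P / d * (z - z0)) by (field; lra).
    rewrite Rabs_mult, (Rabs_right (P / d)) by (apply Rle_ge, Rlt_le, Rdiv_lt_0_compat; lra).
    apply Rmult_lt_reg_l with (d / P). apply Rdiv_lt_0_compat; lra.
    replace (d / P * (P / d * Rabs (z - z0))) with (Rabs (z - z0)) by (field; lra).
    replace (d / P * dl) with (dl * d / P) by (field; lra). auto. }
  assert (Xc : forall x, continuous (fun z => X (clamp d z)) x) by (apply cw_cont; [lra| auto]).
  assert (Hc1 : forall x, continuous (fun z => vf n d (clamp d z) s ^ (n - 1)) x).
  { intros x. apply (cont_pow (fun z => vf n d (clamp d z) s)). unfold vf. fold P.
    apply (cont_mul (fun _ => d / P) (fun z => 1 - (1 - s) * X (clamp d z))). apply cont_cst.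
    apply (cont_sub (fun _ => 1) (fun z => (1 - s) * X (clamp d z))). apply cont_cst.
    apply (cont_mul (fun _ => 1 - s) (fun z => X (clamp d z))). apply cont_cst. apply Xc. }
  split; auto.
  set (h := fun y => vf n d y s ^ (n - 1)).
  assert (hpos : forall z, 0 <= z <= d -> 0 < h z).
  { intros z Hz. unfold h, vf. fold P. apply pow_lt. destruct (Xin z Hz) as [Hx _]. fold X.
    change (zeta_inv n (P * z / d) s) with (X z).
    apply Rmult_lt_0_compat. apply Rdiv_lt_0_compat; lra.
    destruct (Rle_dec s 1); nra. }
  rewrite integral_RInt by (apply ex_RInt_cl; auto).
  rewrite (RInt_ext h (fun z => h (clamp d z))).
  2: { intros x Hx. rewrite Rmin_left, Rmax_right in Hx by lra. rewrite clamp_id; auto; lra. }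
  apply RInt_gt_0; auto.
  - intros x Hx. apply hpos. apply clamp_in; lra.
Qed.


Lemma int_affine n d s a b (g F : R -> R) : (2 <= n)%nat -> 0 < d -> 0 < s ->
  (forall x, continuous (fun z => g (clamp d z)) x) ->
  (forall z, 0 <= z <= d -> F z = a * g z + b) ->
  integral 0 d (fun y => F y * vf n d y s ^ (n - 1)) =
  a * integral 0 d (fun y => g y * vf n d y s ^ (n - 1)) +
  b * integral 0 d (fun y => vf n d y s ^ (n - 1)).
Proof.
  intros Hn Hd Hs Hg HF. destruct (KEY n d s Hn Hd Hs) as [Hc _].
  set (h := fun y => vf n d y s ^ (n - 1)). fold h in Hc |- *.
  assert (E1 : ex_RInt h 0 d) by (apply ex_RInt_cl; auto).
  assert (E2 : ex_RInt (fun y => g y * h y) 0 d).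
  { apply ex_RInt_cl; auto. intros x. apply (cont_mul (fun z => g (clamp d z)) (fun z => h (clamp d z))); auto. }
  assert (E3 : ex_RInt (fun y => a * (g y * h y) + b * h y) 0 d).
  { apply (ex_RInt_plus (V:=R_NormedModule) (fun y => a * (g y * h y)) (fun y => b * h y)).
    apply (ex_RInt_scal (V:=R_NormedModule) (fun y => g y * h y)); auto.
    apply (ex_RInt_scal (V:=R_NormedModule) h); auto. }
  assert (Eq : forall x, Rmin 0 d < x < Rmax 0 d -> a * (g x * h x) + b * h x = F x * h x).
  { intros x Hx. rewrite Rmin_left, Rmax_right in Hx by lra. rewrite HF by lra. ring. }
  assert (E4 : ex_RInt (fun y => F y * h y) 0 d) by (eapply ex_RInt_ext; [exact Eq| exact E3]).
  rewrite !integral_RInt by auto.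
  change (RInt (fun y => F y * h y) 0 d = a * RInt (fun y => g y * h y) 0 d + b * RInt h 0 d).
  rewrite <- (RInt_ext _ _ _ _ Eq).
  rewrite (RInt_plus (V:=R_CompleteNormedModule) (fun y => a * (g y * h y)) (fun y => b * h y)).
  2: apply (ex_RInt_scal (V:=R_NormedModule) (fun y => g y * h y)); auto.
  2: apply (ex_RInt_scal (V:=R_NormedModule) h); auto.
  rewrite (RInt_scal (V:=R_CompleteNormedModule) (fun y => g y * h y)) by auto.
  rewrite (RInt_scal (V:=R_CompleteNormedModule) h) by auto.
  reflexivity.
Qed.

Theorem lemma5p1 (n : nat) (d t lam : R) :
  (2 <= n)%nat -> 0 < d -> 0 < t ->
  (is_eigenvalue_on n d 1 (Bop n d t) lam <->
   is_eigenvalue_on n d t (Atilde n d t) lam).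
Proof.
  intros Hn Hd Ht.
  destruct (KEY n d t Hn Hd Ht) as [_ Nt]. destruct (KEY n d 1 Hn Hd Rlt_0_1) as [_ N1].
  split.
  - intros [u [[HuC2 [HuI [Hu0 Hud]]] [[z0 [Hz0 Hnz]] Heig]]].
    set (k := integral 0 d (fun y => u y * vf n d y t ^ (n - 1)) / integral 0 d (fun y => vf n d y t ^ (n - 1))).
    assert (Ew : Wproj n d t u = fun z => u z - k) by reflexivity.
    assert (Uc : forall x, continuous (fun z => u (clamp d z)) x) by (apply cw_cont; [lra| apply C2_cw; auto]).
    exists (Wproj n d t u). split; [|split].
    + rewrite Ew. split; [apply C2_shift; auto|]. split; [|rewrite deriv_shift; auto].
      rewrite (int_affine n d t 1 (-k) u (fun z => u z - k)); auto.
      * unfold k; field; try (apply Rgt_not_eq); lra.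
      * intros; ring.
    + rewrite Ew. apply NNPP. intros Hno.
      assert (Hall : forall z, 0 <= z <= d -> u z = 0 * u z + k).
      { intros z Hz. apply NNPP; intro Hc. apply Hno. exists z; split; auto. lra. }
      rewrite (int_affine n d 1 0 k u u) in HuI; auto; try lra.
      assert (k = 0) by nra. specialize (Hall z0 Hz0). lra.
    + intros z Hz. unfold Atilde.
      set (F := DH n d (fun z => vf n d z t) (Wproj n d t u)).
      set (c1 := integral 0 d (fun y => F y * vf n d y 1 ^ (n - 1)) / integral 0 d (fun y => vf n d y 1 ^ (n - 1))).
      assert (HF : forall z, 0 <= z <= d -> F z = lam * u z + c1).
      { intros z' Hz'. specialize (Heig z' Hz'). unfold Bop, Wproj at 1 in Heig. fold F in Heig. fold c1 in Heig. lra. }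
      unfold Wproj at 1. rewrite (int_affine n d t lam c1 u F); auto.
      rewrite HF by auto. rewrite Ew. unfold k. field; try (apply Rgt_not_eq); lra.
  - intros [w [[HwC2 [HwI [Hw0 Hwd]]] [[z0 [Hz0 Hnz]] Heig]]].
    set (k := integral 0 d (fun y => w y * vf n d y 1 ^ (n - 1)) / integral 0 d (fun y => vf n d y 1 ^ (n - 1))).
    assert (Eu : Wproj n d 1 w = fun z => w z - k) by reflexivity.
    assert (Wc : forall x, continuous (fun z => w (clamp d z)) x) by (apply cw_cont; [lra| apply C2_cw; auto]).
    assert (Uc : forall x, continuous (fun z => w (clamp d z) - k) x).
    { intros x. apply (continuous_minus (fun z => w (clamp d z)) (fun _ => k)); auto. apply continuous_const. }
    assert (EW : Wproj n d t (Wproj n d 1 w) = w).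
    { rewrite Eu. apply functional_extensionality; intro z. unfold Wproj.
      rewrite (int_affine n d t 1 (-k) w (fun z => w z - k)); auto.
      - rewrite HwI. field; try (apply Rgt_not_eq); lra.
      - intros; ring. }
    exists (Wproj n d 1 w). split; [|split].
    + rewrite Eu. split; [apply C2_shift; auto|]. split; [|rewrite deriv_shift; auto].
      rewrite (int_affine n d 1 1 (-k) w (fun z => w z - k)); auto; try lra.
      * unfold k; field; try (apply Rgt_not_eq); lra.
      * intros; ring.
    + rewrite Eu. apply NNPP. intros Hno.
      assert (Hall : forall z, 0 <= z <= d -> w z = 0 * w z + k).
      { intros z Hz. apply NNPP; intro Hc. apply Hno. exists z; split; auto. lra. }
      rewrite (int_affine n d t 0 k w w) in HwI; auto; try lra.
      assert (k = 0) by nra. specialize (Hall z0 Hz0). lra.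
    + intros z Hz. unfold Bop. rewrite EW.
      set (F := DH n d (fun z => vf n d z t) w).
      set (ct := integral 0 d (fun y => F y * vf n d y t ^ (n - 1)) / integral 0 d (fun y => vf n d y t ^ (n - 1))).
      assert (HF : forall z, 0 <= z <= d -> F z = lam * w z + ct).
      { intros z' Hz'. specialize (Heig z' Hz'). unfold Atilde, Wproj at 1 in Heig. fold F in Heig. fold ct in Heig. lra. }
      unfold Wproj at 1. rewrite (int_affine n d 1 lam ct w F); auto; try lra.
      rewrite HF by auto. rewrite Eu. unfold k. field; try (apply Rgt_not_eq); lra.
Qed.
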